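(* Let $q>1$, let $\mathbb{X}$ be a Banach space and let $f:\overline{q^{\mathbb{Z}}}\to\mathbb{X}$ be almost automorphic. If there is an integer $n_0$ such that $f(q^n)=0$ for all integers $n>n_0$, then $f(t)=0$ for all $t\in\overline{q^{\mathbb{Z}}}$.
   Context: $\overline{q^{\mathbb{Z}}}=\{q^n:n\in\mathbb{Z}\}\cup\{0\}$ with $q>1$; a function on it is continuous iff $\lim_{n\to-\infty}f(q^n)=f(0)$. Definition: a continuous function $f:\overline{q^{\mathbb{Z}}}\to\mathbb{X}$ is almost automorphic if for every sequence of integers $(s_n')\subset\mathbb{Z}$ there exists a subsequence $(s_n)$ such that $g(t):=\lim_{n\to\infty}f(tq^{s_n})$ exists for each $t\in\overline{q^{\mathbb{Z}}}$ and $\lim_{n\to\infty}g(tq^{-s_n})=f(t)$ for each $t\in\overline{q^{\mathbb{Z}}}$. *)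

(* Defs.v *)
From HB Require Import structures.
From mathcomp Require Import all_boot all_order all_algebra.
From mathcomp Require Import all_classical all_reals all_analysis.
Set Implicit Arguments. Unset Strict Implicit. Unset Printing Implicit Defensive.
Import Order.TTheory GRing.Theory Num.Theory.
Import numFieldNormedType.Exports.
Local Open Scope classical_set_scope.
Local Open Scope ring_scope.

Definition qZbar (R : realType) (q : R) : set R :=
  [set t | t = 0 \/ exists n : int, t = q ^ n].

(* Almost automorphic functions on qZbar q (paper's definition).
   f is given on all of R; only its values on qZbar q matter. *)
Definition almost_automorphic (R : realType) (X : normedModType R)
  (q : R) (f : R -> X) : Prop :=
  {within qZbar q, continuous f} /\
  forall s' : nat -> int,
    exists phi : nat -> nat,
      {homo phi : m n / (m < n)%N >-> (m < n)%N} /\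
      exists g : R -> X,
        (forall t, qZbar q t ->
           (fun n => f (t * q ^ (s' (phi n)))) @ \oo --> g t) /\
        (forall t, qZbar q t ->
           (fun n => g (t * q ^ (- s' (phi n)))) @ \oo --> f t).

(* Main.v *)
Require Import Defs.
From HB Require Import structures.
From mathcomp Require Import all_boot all_order all_algebra.
From mathcomp Require Import all_classical all_reals all_analysis.
From mathcomp Require Import zify.
Import Order.TTheory GRing.Theory Num.Theory.
Import numFieldNormedType.Exports.
Local Open Scope classical_set_scope.
Local Open Scope ring_scope.

Theorem theorem3p4 (R : realType) (X : completeNormedModType R) (q : R)
  (f : R -> X) :
  1 < q ->
  almost_automorphic q f ->
  (exists n0 : int, forall n : int, n0 < n -> f (q ^ n) = 0) ->
  forall t, qZbar q t -> f t = 0.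
Proof.
move=> q1 [fc aa] [n0 hn0].
have q0 : q != 0 by rewrite gt_eqF // (lt_trans ltr01 q1).
have qZ : forall m : int, qZbar q (q ^ m) by move=> m; right; exists m.
have key : forall m : int, f (q ^ m) = 0.
  have [phi [phi_inc [g [g1 g2]]]] := aa (fun n => n%:Z).
  have phige : forall n, (n <= phi n)%N.
    elim=> // n IH; exact: leq_ltn_trans IH (phi_inc n n.+1 (ltnSn n)).
  have gq : forall m : int, g (q ^ m) = 0.
    move=> m; apply: (cvg_unique (@norm_hausdorff _ _) (g1 _ (qZ m))).
    apply: (cvg_near_cst (0:X)); exists `|n0 - m|%N.+1 => // n /= hn.
    rewrite -expfzDr //; apply: hn0.
    have := phige n; lia.
  move=> m; apply: (cvg_unique (@norm_hausdorff _ _) (g2 _ (qZ m))).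
  apply: cvg_near_cst; apply: nearW => n.
  by rewrite -expfzDr // gq.
move=> t [->|[m ->]]; last exact: key.
have := (subspace_continuousP _ _).1 fc 0 (or_introl erefl).
move=> fc0.
pose u (k : nat) : R := q ^ (- k%:Z).
have u0 : u @ \oo --> within (qZbar q) (nbhs (0:R)).
  have uc : u @ \oo --> (0:R).
    have -> : u = GRing.exp q^-1.
      by apply/funext => k; rewrite /u -invr_expz expfV.
    apply: cvg_expr; rewrite ger0_norm ?invr_ge0 ?(le_trans ler01 (ltW q1)) //.
    by rewrite invf_lt1 // (lt_trans ltr01 q1).
  move=> P /= [e e0 he]; have := uc (ball (0:R) e) (nbhsx_ballx _ _ e0).
  case=> N _ hN; exists N => // k hk; apply: he; first exact: hN.
  exact: qZ.
have : (f \o u) @ \oo --> f 0 := cvg_trans (cvg_app f u0) fc0.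
move=> H; apply: (cvg_unique (@norm_hausdorff _ _) H).
apply: cvg_near_cst; apply: nearW => k /=; exact: key.
Qed.
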